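(* Let $K$ be a field of characteristic $\neq 2$, $n\ge1$, and let $\mathcal C$ be an EACP over $K$ with natural basis $\{h_1,\dots,h_n,r\}$ and structural constants $a_{ij},b_i$, and suppose $\det(a_{ij})_{i,j=1}^n\neq0$. For $a\in\mathcal C$ let $L_a:\mathcal C\to\mathcal C$, $L_a(x)=ax$, and write $L_i=L_{h_i}$. Then the set of all left multiplication operators $\{L_a: a\in\mathcal C\}$ equals the linear span of $\{L_1,\dots,L_n,L_r\}$, the map $a\mapsto L_a$ is injective, and this span has the same dimension $n+1$ as $\mathcal C$ (so $\{L_1,\dots,L_n,L_r\}$ is a basis of it).
   Context: An EACP over a field $K$ (characteristic $\neq 2$) is a $K$-algebra $\mathcal C$ with a basis $\{h_1,\dots,h_n,r\}$ (called a natural basis) whose multiplication is determined by bilinearity from $$h_ir=rh_i=\tfrac12\Big(\sum_{j=1}^n a_{ij}h_j+b_ir\Big),\qquad h_ih_j=0\ (i,j=1,\dots,n),\qquad rr=0,$$ for some constants $a_{ij},b_i\in K$. *)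

(* Defs.v *)
From HB Require Import structures.
From mathcomp Require Import all_boot all_order all_algebra.
Set Implicit Arguments. Unset Strict Implicit. Unset Printing Implicit Defensive.
Import Order.TTheory GRing.Theory Num.Theory.
Local Open Scope ring_scope.

(* Concrete model of an EACP: C = K^(n+1), with coordinates indexed by
   'I_(n + 1); the natural basis is h_i = eacp_e (lshift 1 i) (i : 'I_n)
   and r = eacp_e (rshift n ord0). *)

Definition eacp_e (K : fieldType) (n : nat) (k : 'I_(n + 1)) : 'rV[K]_(n + 1) :=
  delta_mx 0 k.

Definition eacp_h (K : fieldType) (n : nat) (i : 'I_n) : 'rV[K]_(n + 1) :=
  eacp_e K (lshift 1 i).

Definition eacp_r (K : fieldType) (n : nat) : 'rV[K]_(n + 1) :=
  eacp_e K (rshift n (@ord0 0)).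

(* h_i r = r h_i = 1/2 (sum_j a_ij h_j + b_i r) *)
Definition eacp_hr (K : fieldType) (n : nat) (A : 'M[K]_n) (b : 'rV[K]_n)
    (i : 'I_n) : 'rV[K]_(n + 1) :=
  2^-1 *: (\sum_(j < n) A i j *: eacp_h K j + b 0 i *: eacp_r K n).

Definition eacp_basis_mul (K : fieldType) (n : nat) (A : 'M[K]_n) (b : 'rV[K]_n)
    (p q : 'I_(n + 1)) : 'rV[K]_(n + 1) :=
  match split p, split q with
  | inl i, inr _ => eacp_hr A b i
  | inr _, inl i => eacp_hr A b i
  | _, _ => 0
  end.

Definition eacp_mul (K : fieldType) (n : nat) (A : 'M[K]_n) (b : 'rV[K]_n)
    (x y : 'rV[K]_(n + 1)) : 'rV[K]_(n + 1) :=
  \sum_(p < n + 1) \sum_(q < n + 1) (x 0 p * y 0 q) *: eacp_basis_mul A b p q.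

(* matrix of the left multiplication operator L_a : x |-> a x
   (row-vector convention: x *m eacp_L A b a = a x) *)
Definition eacp_L (K : fieldType) (n : nat) (A : 'M[K]_n) (b : 'rV[K]_n)
    (a : 'rV[K]_(n + 1)) : 'M[K]_(n + 1) :=
  lin1_mx (eacp_mul A b a).

(* Main.v *)
Require Import Defs.
From HB Require Import structures.
From mathcomp Require Import all_boot all_order all_algebra.
Import Order.TTheory GRing.Theory Num.Theory.
Local Open Scope ring_scope.

Set Implicit Arguments.
Section S.
Variables (K : fieldType) (n : nat) (A : 'M[K]_n) (b : 'rV[K]_n).

Lemma split_l (i : 'I_n) : split (lshift 1 i) = inl i.
Proof. exact: (unsplitK (inl _ i)). Qed.
Lemma split_r (i : 'I_1) : split (rshift n i) = inr i.
Proof. exact: (unsplitK (inr _ i)). Qed.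

Lemma mul_lin k (x y z : 'rV[K]_(n+1)) : eacp_mul A b (k *: x + y) z = k *: eacp_mul A b x z + eacp_mul A b y z.
Proof.
rewrite /eacp_mul scaler_sumr -big_split; apply: eq_bigr => p _.
rewrite scaler_sumr -big_split; apply: eq_bigr => q _.
by rewrite !mxE mulrDl -mulrA scalerDl scalerA.
Qed.

Lemma L_lin k (x y : 'rV[K]_(n+1)) : eacp_L A b (k *: x + y) = k *: eacp_L A b x + eacp_L A b y.
Proof. by apply/matrixP => i j; rewrite !mxE mul_lin !mxE. Qed.

Lemma L0 : eacp_L A b 0 = 0.
Proof.
apply/matrixP => i j; rewrite !mxE /eacp_mul summxE big1 // => p _.
by rewrite summxE big1 // => q _; rewrite !mxE mul0r; rewrite ?scale0r ?mxE ?mul0r.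
Qed.

Lemma L_sum (I : Type) (r : seq I) (c : I -> K) (v : I -> 'rV[K]_(n+1)) :
  eacp_L A b (\sum_(i <- r) c i *: v i) = \sum_(i <- r) c i *: eacp_L A b (v i).
Proof.
elim: r => [|x r IH]; first by rewrite !big_nil L0.
by rewrite !big_cons L_lin IH.
Qed.

Definition aof (c : 'rV[K]_n) (d : K) := \sum_(i < n) c 0 i *: eacp_h K i + d *: eacp_r K n.

Lemma L_aof c d : eacp_L A b (aof c d) = \sum_(i < n) c 0 i *: eacp_L A b (eacp_h K i)
                         + d *: eacp_L A b (eacp_r K n).
Proof. by rewrite /aof addrC L_lin L_sum addrC. Qed.

Lemma aof_surj (a : 'rV[K]_(n+1)) : a = aof (\row_i a 0 (lshift 1 i)) (a 0 (rshift n ord0)).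
Proof.
rewrite {1}(row_sum_delta a) big_split_ord /= big_ord1 /aof.
congr (_ + _); apply: eq_bigr => i _; by rewrite ?mxE.
Qed.

Lemma mul_e (a : 'rV[K]_(n+1)) (k : 'I_(n+1)) : eacp_mul A b a (delta_mx 0 k) = \sum_p a 0 p *: eacp_basis_mul A b p k.
Proof.
rewrite /eacp_mul; apply: eq_bigr => p _.
rewrite (bigD1 k) //= big1 ?addr0; first by rewrite mxE !eqxx /= mulr1.
by move=> q /negbTE nq; rewrite mxE nq mulr0 scale0r.
Qed.


Lemma bm_lr i : eacp_basis_mul A b (lshift 1 i) (rshift n ord0) = eacp_hr A b i.
Proof. by rewrite /eacp_basis_mul split_l split_r. Qed.
Lemma bm_rl i : eacp_basis_mul A b (rshift n ord0) (lshift 1 i) = eacp_hr A b i.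
Proof. by rewrite /eacp_basis_mul split_l split_r. Qed.
Lemma bm_ll i j : eacp_basis_mul A b (lshift 1 i) (lshift 1 j) = 0.
Proof. by rewrite /eacp_basis_mul !split_l. Qed.
Lemma bm_rr : eacp_basis_mul A b (rshift n ord0) (rshift n ord0) = 0.
Proof. by rewrite /eacp_basis_mul !split_r. Qed.

Lemma h_coord_l (i j : 'I_n) : eacp_h K i 0 (lshift 1 j) = (i == j)%:R.
Proof.
by rewrite /eacp_h /eacp_e mxE eqxx !eq_shift /= eq_sym.
Qed.
Lemma h_coord_r (i : 'I_n) : eacp_h K i 0 (rshift n ord0) = 0.
Proof.
by rewrite /eacp_h /eacp_e mxE eqxx !eq_shift.
Qed.
Lemma r_coord_l (j : 'I_n) : eacp_r K n 0 (lshift 1 j) = 0.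
Proof.
by rewrite /eacp_r /eacp_e mxE eqxx !eq_shift.
Qed.
Lemma r_coord_r : eacp_r K n 0 (rshift n ord0) = 1.
Proof. by rewrite /eacp_r /eacp_e mxE !eqxx. Qed.

Lemma sum_delta_l (c : 'I_n -> K) (j : 'I_n) : \sum_i c i * (i == j)%:R = c j.
Proof.
rewrite (bigD1 j) //= eqxx mulr1 big1 ?addr0 // => i /negbTE ->; by rewrite mulr0.
Qed.

Lemma aof_l c d j : aof c d 0 (lshift 1 j) = c 0 j.
Proof.
rewrite /aof mxE summxE [X in _ + X]mxE r_coord_l mulr0 addr0 -[RHS]sum_delta_l.
by apply: eq_bigr => i _; rewrite mxE h_coord_l.
Qed.
Lemma aof_r c d : aof c d 0 (rshift n ord0) = d.
Proof.
rewrite /aof mxE summxE [X in _ + X]mxE r_coord_r mulr1 big1 ?add0r // => i _.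
by rewrite mxE h_coord_r mulr0.
Qed.

Lemma hr_l i j : eacp_hr A b i 0 (lshift 1 j) = 2^-1 * A i j.
Proof.
rewrite /eacp_hr mxE mxE summxE [X in _ + X]mxE r_coord_l mulr0 addr0 -[A i j]sum_delta_l.
congr (_ * _); apply: eq_bigr => k _; by rewrite mxE h_coord_l.
Qed.

Lemma mul_aof c d k : eacp_mul A b (aof c d) (delta_mx 0 k) =
  \sum_i c 0 i *: eacp_basis_mul A b (lshift 1 i) k + d *: eacp_basis_mul A b (rshift n ord0) k.
Proof.
rewrite mul_e big_split_ord /= big_ord1 aof_r; congr (_ + _).
by apply: eq_bigr => i _; rewrite aof_l.
Qed.

Lemma Lentry a k j : eacp_L A b a k j = eacp_mul A b a (delta_mx 0 k) 0 j.
Proof. by rewrite /eacp_L mxE. Qed.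

Lemma vec0 (v : 'rV[K]_n) : \det A != 0 -> v *m A = 0 -> v = 0.
Proof.
move=> dA vA; have uA : A \in unitmx by rewrite unitmxE unitfE.
by rewrite -(mulmxK uA v) vA mul0mx.
Qed.

Lemma indep c d : (2%:R : K) != 0 -> (0 < n)%N -> \det A != 0 ->
  eacp_L A b (aof c d) = 0 -> c = 0 /\ d = 0.
Proof.
move=> h2 n0 dA H.
have h2i : (2^-1 : K) != 0 by rewrite invr_eq0.
have E k j : eacp_mul A b (aof c d) (delta_mx 0 k) 0 j = 0.
  by rewrite -Lentry H mxE.
have c0 : c = 0.
  apply: vec0 => //; apply/rowP => j; rewrite !mxE.
  have := E (rshift n ord0) (lshift 1 j).
  rewrite mul_aof bm_rr scaler0 addr0 summxE => /eqP.
  rewrite (eq_bigr (fun i => 2^-1 * (c 0 i * A i j))); last first.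
    by move=> i _; rewrite bm_lr mxE hr_l mulrCA.
  by rewrite -mulr_sumr mulf_eq0 (negbTE h2i) /= => /eqP.
split=> //; apply/eqP/negP => /negP dn0.
pose i0 : 'I_n := Ordinal n0.
have : delta_mx 0 i0 = 0 :> 'rV[K]_n.
  apply: vec0 => //; apply/rowP => j; rewrite -rowE !mxE.
  have := E (lshift 1 i0) (lshift 1 j).
  rewrite mul_aof c0 big1; last by move=> i _; rewrite mxE scale0r.
  rewrite add0r bm_rl mxE hr_l => /eqP.
  by rewrite !mulf_eq0 (negbTE dn0) (negbTE h2i) /= => /eqP.
by move/matrixP => /(_ 0 i0); rewrite !mxE !eqxx /= => /eqP; rewrite oner_eq0.
Qed.
End S.
Arguments aof {K n}.

Theorem mainTheorem10 (K : fieldType) (n : nat) (A : 'M[K]_n) (b : 'rV[K]_n) :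
  (2%:R : K) != 0 -> (0 < n)%N -> \det A != 0 ->
  [/\ (* every L_a lies in span{L_1,...,L_n,L_r} *)
      (forall a : 'rV[K]_(n + 1), exists (c : 'rV[K]_n) (d : K),
          eacp_L A b a = \sum_(i < n) c 0 i *: eacp_L A b (eacp_h K i)
                         + d *: eacp_L A b (eacp_r K n)),
      (* every element of the span is some L_a *)
      (forall (c : 'rV[K]_n) (d : K), exists a : 'rV[K]_(n + 1),
          \sum_(i < n) c 0 i *: eacp_L A b (eacp_h K i)
            + d *: eacp_L A b (eacp_r K n) = eacp_L A b a),
      (* a |-> L_a is injective *)
      injective (eacp_L A b) &
      (* L_1,...,L_n,L_r are linearly independent, so the span has dimension n+1 *)
      (forall (c : 'rV[K]_n) (d : K),
          \sum_(i < n) c 0 i *: eacp_L A b (eacp_h K i)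
            + d *: eacp_L A b (eacp_r K n) = 0 -> c = 0 /\ d = 0)].
Proof.
move=> h2 n0 dA; split.
- move=> a; exists (\row_i a 0 (lshift 1 i)), (a 0 (rshift n ord0)).
  by rewrite -L_aof -aof_surj.
- by move=> c d; exists (aof c d); rewrite L_aof.
- move=> x y Hxy.
  have H0 : eacp_L A b ((-1) *: y + x) = 0 by rewrite L_lin Hxy scaleN1r addNr.
  move: H0; rewrite (aof_surj _ _ ((-1) *: y + x)) => /(indep h2 n0 dA) [c0 d0].
  move: (aof_surj _ _ ((-1) *: y + x)); rewrite c0 d0 /aof big1 ?scale0r ?addr0.
    by rewrite scaleN1r => /eqP; rewrite addrC subr_eq0 => /eqP.
  by move=> i _; rewrite mxE scale0r.
- by move=> c d; rewrite -L_aof; apply: indep.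
Qed.
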